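(* Let $h_{00},h_{11},h_{22},h_{33}>0$, $\det h = h_{00}h_{11}h_{22}h_{33}$, $\beta=\frac{1}{6(\det h)^2}$, and $p(x,y)=x^4+x^3y+xy^3+y^4$, $q(x,y)=5x^4+3x^3y-xy^3-3y^4$. Consider $\dot g_{00} = -\beta\, p(-g_{11},g_{22})\, g_{00}^3$, $\dot g_{11} = -\beta\, q(-g_{11},g_{22})\, g_{00}^2 g_{11}$, $\dot g_{22} = -\beta\, q(g_{22},-g_{11})\, g_{00}^2 g_{22}$, $\dot g_{33} = 3\beta\, p(-g_{11},g_{22})\, g_{00}^2 g_{33}$, with $g_{ii}(0)=h_{ii}$. Then the solution exists for all $t\ge0$, $g_{33}$ is nondecreasing, and $(g_{11}g_{22})^{25} = \eta\,(g_{22}+g_{11})^4(2g_{22}^2-g_{11}g_{22}+2g_{11}^2)^3$ with $\eta = \frac{(h_{11}h_{22})^{25}}{(h_{22}+h_{11})^4(2h_{22}^2-h_{11}h_{22}+2h_{11}^2)^3}$. As $t\to\infty$: $g_{11},g_{22}\to(432\eta)^{1/40}$, $g_{00}\to \left(\frac{h_{00}^3h_{33}}{\det h}\right)^{1/2}(432\eta)^{1/40}$, $g_{33}\to\left(\frac{(\det h)^3}{h_{00}^3h_{33}}\right)^{1/2}(432\eta)^{-3/40}$. If $h_{11}=h_{22}$ the solution is constant. If $h_{11}<h_{22}$, then $g_{11}<g_{22}$ for all $t$, $g_{11}$ is increasing and $g_{22}$ is decreasing.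
   Context: This system is Bach flow $\partial_t g = B$, $g(0)=h$, on $\mathbb{R}\times E(2)$ ($E(2)$ the universal cover of the group of Euclidean motions of the plane) written in a diagonalizing basis: a left-invariant frame $\{\partial_0,e_1,e_2,e_3\}$ with $[e_i,e_j]=\sum \varepsilon_{ijl}E^{lk}e_k$, $E=\mathrm{diag}(-1,-1,0)$, in which the product metric is $g=\mathrm{diag}(g_{00},g_{11},g_{22},g_{33})$; $B$ is the Bach tensor. Along the flow $g_{00}g_{11}g_{22}g_{33}=\det h$ is constant. *)

(* Defs.v *)
From Stdlib Require Import Reals.
Open Scope R_scope.

Definition pp (x y : R) : R := x^4 + x^3 * y + x * y^3 + y^4.
Definition qq (x y : R) : R := 5 * x^4 + 3 * x^3 * y - x * y^3 - 3 * y^4.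

Definition beta (h0 h1 h2 h3 : R) : R := 1 / (6 * (h0 * h1 * h2 * h3) ^ 2).

(* The derivative at t is the ordinary (two-sided) derivative of a function
   R -> R; values for t < 0 are irrelevant except for a neighbourhood of 0. *)
Definition is_solution (h0 h1 h2 h3 : R) (g0 g1 g2 g3 : R -> R) : Prop :=
  g0 0 = h0 /\ g1 0 = h1 /\ g2 0 = h2 /\ g3 0 = h3 /\
  forall t, 0 <= t ->
    derivable_pt_lim g0 t
      (- beta h0 h1 h2 h3 * pp (- g1 t) (g2 t) * (g0 t) ^ 3) /\
    derivable_pt_lim g1 t
      (- beta h0 h1 h2 h3 * qq (- g1 t) (g2 t) * (g0 t) ^ 2 * g1 t) /\
    derivable_pt_lim g2 t
      (- beta h0 h1 h2 h3 * qq (g2 t) (- g1 t) * (g0 t) ^ 2 * g2 t) /\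
    derivable_pt_lim g3 t
      (3 * beta h0 h1 h2 h3 * pp (- g1 t) (g2 t) * (g0 t) ^ 2 * g3 t).

Definition tends_at_infty (f : R -> R) (l : R) : Prop :=
  forall eps, 0 < eps -> exists M, forall t, M <= t -> Rabs (f t - l) < eps.

Definition eta_of (h1 h2 : R) : R :=
  (h1 * h2) ^ 25 / ((h2 + h1) ^ 4 * (2 * h2 ^ 2 - h1 * h2 + 2 * h1 ^ 2) ^ 3).

(* Main.v *)
Require Import Defs.
From Stdlib Require Import Reals Lra Lia Psatz ClassicalEpsilon.
From Coquelicot Require Import Coquelicot.
Open Scope R_scope.


Lemma dpl_eq f x l l' : derivable_pt_lim f x l -> l = l' -> derivable_pt_lim f x l'.
Proof. intros H ->; exact H. Qed.

Lemma dpl_cont f x l : derivable_pt_lim f x l -> continuity_pt f x.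
Proof. intros H; apply derivable_continuous_pt; exists l; exact H. Qed.

Lemma dpl_mult (f g : R -> R) x lf lg : derivable_pt_lim f x lf -> derivable_pt_lim g x lg ->
  derivable_pt_lim (fun s => f s * g s) x (lf * g x + f x * lg).
Proof. intros; now apply (derivable_pt_lim_mult f g). Qed.

Lemma dpl_opp (f : R -> R) x l : derivable_pt_lim f x l ->
  derivable_pt_lim (fun s => - f s) x (- l).
Proof. intros; now apply (derivable_pt_lim_opp f). Qed.

Lemma dpl_plus (f g : R -> R) x lf lg : derivable_pt_lim f x lf -> derivable_pt_lim g x lg ->
  derivable_pt_lim (fun s => f s + g s) x (lf + lg).
Proof. intros; now apply (derivable_pt_lim_plus f g). Qed.

Lemma dpl_minus (f g : R -> R) x lf lg : derivable_pt_lim f x lf -> derivable_pt_lim g x lg ->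
  derivable_pt_lim (fun s => f s - g s) x (lf - lg).
Proof. intros; now apply (derivable_pt_lim_minus f g). Qed.

Lemma dpl_comp (f g : R -> R) x lg lf : derivable_pt_lim g x lg ->
  derivable_pt_lim f (g x) lf -> derivable_pt_lim (fun s => f (g s)) x (lf * lg).
Proof. intros; now apply (derivable_pt_lim_comp g f). Qed.

Lemma dpl_const c x : derivable_pt_lim (fun _ => c) x 0.
Proof. apply derivable_pt_lim_const. Qed.

Lemma dpl_ln (g : R -> R) x l : 0 < g x -> derivable_pt_lim g x l ->
  derivable_pt_lim (fun s => ln (g s)) x (l / g x).
Proof. intros Hp H. apply (dpl_eq _ _ _ _ (dpl_comp ln g x l _ H (derivable_pt_lim_ln (g x) Hp))).
  unfold Rdiv; ring. Qed.

Lemma dpl_pow (g : R -> R) n x l : derivable_pt_lim g x l ->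
  derivable_pt_lim (fun s => g s ^ n) x (INR n * g x ^ pred n * l).
Proof. intros H. apply (dpl_eq _ _ _ _ (dpl_comp (fun y => y^n) g x l _ H (derivable_pt_lim_pow (g x) n))). ring. Qed.

Lemma mono_le (f f' : R -> R) a b : a <= b ->
  (forall c, a <= c <= b -> derivable_pt_lim f c (f' c)) ->
  (forall c, a <= c <= b -> 0 <= f' c) -> f a <= f b.
Proof.
  intros Hab Hd Hp. destruct (Req_dec a b) as [->|Hne]; [lra|].
  destruct (MVT_cor2 f f' a b) as [c [Hc1 Hc2]]; [lra|assumption|].
  assert (0 <= f' c) by (apply Hp; lra). nra.
Qed.

Lemma mono_lt (f f' : R -> R) a b : a < b ->
  (forall c, a <= c <= b -> derivable_pt_lim f c (f' c)) ->
  (forall c, a <= c <= b -> 0 < f' c) -> f a < f b.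
Proof.
  intros Hab Hd Hp.
  destruct (MVT_cor2 f f' a b) as [c [Hc1 Hc2]]; [lra|assumption|].
  assert (0 < f' c) by (apply Hp; lra). nra.
Qed.

Lemma dpl_exp_lin K x : derivable_pt_lim (fun s => exp (K * s)) x (K * exp (K * x)).
Proof.
  apply is_derive_Reals. auto_derive; auto. ring.
Qed.

Lemma bound_cont (b : R -> R) T : 0 <= T ->
  (forall t, 0 <= t <= T -> continuity_pt b t) ->
  exists K, forall t, 0 <= t <= T -> Rabs (b t) <= K.
Proof.
  intros HT Hc.
  destruct (continuity_ab_maj (fun t => Rabs (b t)) 0 T HT) as [M [HM _]].
  - intros c Hc'. apply continuity_pt_comp with (f1 := b) (f2 := Rabs).
    apply Hc; auto. apply Rcontinuity_abs.
  - exists (Rabs (b M)). intros; apply HM; auto.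
Qed.

Lemma gronwall (v b : R -> R) T : 0 <= T ->
  (forall t, 0 <= t <= T -> derivable_pt_lim v t (b t * v t)) ->
  (forall t, 0 <= t <= T -> 0 <= v t) ->
  (forall t, 0 <= t <= T -> continuity_pt b t) ->
  exists K, v 0 * exp (- (K * T)) <= v T /\ v T <= v 0 * exp (K * T).
Proof.
  intros HT Hd Hp Hc. destruct (bound_cont b T HT Hc) as [K HK].
  exists K. split.
  - assert (H := mono_le (fun s => v s * exp (K * s))
       (fun s => (b s + K) * v s * exp (K * s)) 0 T HT).
    simpl in H. rewrite Rmult_0_r, exp_0, Rmult_1_r in H.
    assert (v 0 <= v T * exp (K * T)).
    { apply H.
      - intros c Hc'. eapply dpl_eq. apply dpl_mult. apply Hd; auto.
        apply dpl_exp_lin. cbv beta; ring.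
      - intros c Hc'. specialize (HK c Hc'). specialize (Hp c Hc').
        assert (0 < exp (K * c)) by apply exp_pos.
        apply Rabs_le_between in HK. apply Rmult_le_pos; [|lra]. nra. }
    assert (0 < exp (K*T)) by apply exp_pos.
    rewrite exp_Ropp. apply Rmult_le_reg_r with (exp (K*T)); auto.
    field_simplify; [lra | lra].
  - assert (v T * exp (- K * T) <= v 0).
    { enough (- (v 0 * exp (- K * 0)) <= - (v T * exp (-K*T))) as HH.
      { rewrite Rmult_0_r, exp_0, Rmult_1_r in HH. lra. }
      apply (mono_le (fun s => - (v s * exp (- K * s)))
       (fun s => - ((b s - K) * v s * exp (- K * s))) 0 T HT).
      - intros c Hc'. apply dpl_opp.
        eapply dpl_eq. apply dpl_mult. apply Hd; auto.
        apply dpl_exp_lin. cbv beta; ring.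
      - intros c Hc'. specialize (HK c Hc'). specialize (Hp c Hc').
        assert (0 < exp (-K * c)) by apply exp_pos.
        apply Rabs_le_between in HK.
        enough (0 <= (K - b c) * v c * exp (- K * c)) by lra.
        apply Rmult_le_pos; [|lra]. nra. }
    assert (0 < exp (K*T)) by apply exp_pos.
    replace (-K * T) with (- (K*T)) in H by ring. rewrite exp_Ropp in H.
    assert (v T = v T * / exp (K * T) * exp (K*T)) as ->. field; lra.
    apply Rmult_le_compat_r; lra.
Qed.

Lemma sq_deriv (u a : R -> R) t : derivable_pt_lim u t (a t * u t) ->
  derivable_pt_lim (fun s => u s * u s) t ((2 * a t) * (u t * u t)).
Proof. intros H. apply (dpl_eq _ _ _ _ (dpl_mult u u t _ _ H H)). ring. Qed.

Lemma lin_pos (u a : R -> R) :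
  (forall t, 0 <= t -> derivable_pt_lim u t (a t * u t)) ->
  (forall t, 0 <= t -> continuity_pt a t) -> 0 < u 0 ->
  forall t, 0 <= t -> 0 < u t.
Proof.
  intros Hd Hc H0.
  assert (Hnz : forall T, 0 <= T -> u T <> 0).
  { intros T HT Hz.
    destruct (gronwall (fun s => u s * u s) (fun s => 2 * a s) T HT) as [K [HK _]].
    - intros; apply sq_deriv, Hd; lra.
    - intros; nra.
    - intros; apply continuity_pt_scal. apply Hc; lra.
    - cbv beta in HK. rewrite Hz in HK. assert (0 < exp (-(K*T))) by apply exp_pos. assert (0 < u 0 * u 0 * exp (-(K*T))) by (apply Rmult_lt_0_compat; nra). lra. }
  intros T HT. destruct (Rlt_or_le 0 (u T)) as [|Hle]; auto.
  exfalso. assert (u T < 0) by (destruct Hle; auto; exfalso; now apply (Hnz T)).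
  destruct (Req_dec T 0) as [->|HT0]; [lra|].
  destruct (Ranalysis5.IVT_interv (fun s => - u s) 0 T) as [z [Hz1 Hz2]].
  - intros s Hs. apply continuity_pt_opp. eapply dpl_cont; apply Hd; lra.
  - lra.
  - lra.
  - lra.
  - apply (Hnz z); lra.
Qed.

Lemma lin_zero (u a : R -> R) :
  (forall t, 0 <= t -> derivable_pt_lim u t (a t * u t)) ->
  (forall t, 0 <= t -> continuity_pt a t) -> u 0 = 0 ->
  forall t, 0 <= t -> u t = 0.
Proof.
  intros Hd Hc H0 T HT.
  destruct (gronwall (fun s => u s * u s) (fun s => 2 * a s) T HT) as [K [_ HK]].
  - intros; apply sq_deriv, Hd; lra.
  - intros; nra.
  - intros; apply continuity_pt_scal. apply Hc; lra.
  - cbv beta in HK. rewrite H0 in HK. nra.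
Qed.

Lemma const_deriv (f : R -> R) :
  (forall t, 0 <= t -> derivable_pt_lim f t 0) -> forall t, 0 <= t -> f t = f 0.
Proof.
  intros Hd t Ht. apply Rle_antisym.
  - enough (- f 0 <= - f t) by lra.
    apply (mono_le (fun s => - f s) (fun _ => - 0)); auto.
    + intros; apply dpl_opp, Hd; lra.
    + intros; lra.
  - apply (mono_le f (fun _ => 0)); auto.
    + intros; apply Hd; lra.
    + intros; lra.
Qed.

Lemma tends_is_lim f l : tends_at_infty f l <-> is_lim f p_infty l.
Proof.
  rewrite <- is_lim_spec. unfold tends_at_infty, is_lim'. simpl. split.
  - intros H eps. destruct (H eps (cond_pos eps)) as [M HM]. exists M.
    intros; apply HM; lra.
  - intros H eps Heps. destruct (H (mkposreal eps Heps)) as [M HM]. exists (M+1).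
    intros; apply HM; lra.
Qed.

Lemma mono_conv (f : R -> R) B :
  (forall s t, 0 <= s -> s <= t -> f s <= f t) -> (forall t, 0 <= t -> f t <= B) ->
  exists l, tends_at_infty f l /\ (forall t, 0 <= t -> f t <= l) /\
    (forall M, (forall t, 0 <= t -> f t <= M) -> l <= M).
Proof.
  intros Hm HB.
  set (E := fun y => exists t, 0 <= t /\ y = f t).
  destruct (completeness E) as [l [Hub Hlub]].
  - exists B. intros y [t [Ht ->]]. apply HB; auto.
  - exists (f 0), 0. split; auto; lra.
  - exists l. split; [|split].
    + intros eps Heps.
      destruct (classic (exists t, 0 <= t /\ l - eps < f t)) as [[t0 [Ht0 Hf]]|Hn].
      * exists t0. intros t Ht. assert (f t0 <= f t) by (apply Hm; lra).
        assert (f t <= l) by (apply Hub; exists t; split; auto; lra).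
        apply Rabs_def1; lra.
      * exfalso. assert (l <= l - eps); [|lra].
        apply Hlub. intros y [t [Ht ->]]. apply Rnot_lt_le. intro. apply Hn. eauto.
    + intros t Ht. apply Hub. exists t; auto.
    + intros M HM. apply Hlub. red. intros y [t [Ht ->]]. auto.
Qed.


Lemma cmult (f g : R -> R) x : continuity_pt f x -> continuity_pt g x ->
  continuity_pt (fun s => f s * g s) x.
Proof. intros; now apply (continuity_pt_mult f g). Qed.
Lemma cplus (f g : R -> R) x : continuity_pt f x -> continuity_pt g x ->
  continuity_pt (fun s => f s + g s) x.
Proof. intros; now apply (continuity_pt_plus f g). Qed.
Lemma cminus (f g : R -> R) x : continuity_pt f x -> continuity_pt g x ->
  continuity_pt (fun s => f s - g s) x.
Proof. intros; now apply (continuity_pt_minus f g). Qed.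
Lemma copp (f : R -> R) x : continuity_pt f x -> continuity_pt (fun s => - f s) x.
Proof. intros; now apply (continuity_pt_opp f). Qed.
Lemma cconst c x : continuity_pt (fun _ => c) x.
Proof. apply continuity_pt_const. intros a b; reflexivity. Qed.
Lemma cpow (f : R -> R) n x : continuity_pt f x -> continuity_pt (fun s => f s ^ n) x.
Proof. intros H. apply (continuity_pt_comp f (fun y => y ^ n)); auto.
  eapply dpl_cont. apply derivable_pt_lim_pow. Qed.

Ltac ctac := repeat first [ apply cmult | apply cplus | apply cminus | apply copp
  | apply cpow | apply cconst | eassumption ].
Ltac dtac := repeat first [ apply dpl_mult | apply dpl_plus | apply dpl_minus | apply dpl_opp
  | apply dpl_pow | apply dpl_const | eassumption ].

Definition cA0 (b : R) (g0 g1 g2 : R -> R) t := - b * pp (- g1 t) (g2 t) * g0 t ^ 2.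
Definition cA1 (b : R) (g0 g1 g2 : R -> R) t := - b * qq (- g1 t) (g2 t) * g0 t ^ 2.
Definition cA2 (b : R) (g0 g1 g2 : R -> R) t := - b * qq (g2 t) (- g1 t) * g0 t ^ 2.
Definition cA3 (b : R) (g0 g1 g2 : R -> R) t := 3 * b * pp (- g1 t) (g2 t) * g0 t ^ 2.

Lemma beta_pos h0 h1 h2 h3 : 0 < h0 -> 0 < h1 -> 0 < h2 -> 0 < h3 -> 0 < beta h0 h1 h2 h3.
Proof.
  intros. unfold beta. assert (0 < h0*h1*h2*h3) by (repeat apply Rmult_lt_0_compat; auto).
  apply Rdiv_lt_0_compat; [lra|]. apply Rmult_lt_0_compat; [lra|]. apply pow_lt; auto.
Qed.

Lemma sol_deriv h0 h1 h2 h3 g0 g1 g2 g3 : is_solution h0 h1 h2 h3 g0 g1 g2 g3 ->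
  forall t, 0 <= t ->
  let b := beta h0 h1 h2 h3 in
  derivable_pt_lim g0 t (cA0 b g0 g1 g2 t * g0 t) /\
  derivable_pt_lim g1 t (cA1 b g0 g1 g2 t * g1 t) /\
  derivable_pt_lim g2 t (cA2 b g0 g1 g2 t * g2 t) /\
  derivable_pt_lim g3 t (cA3 b g0 g1 g2 t * g3 t).
Proof.
  intros [_ [_ [_ [_ HS]]]] t Ht b. destruct (HS t Ht) as [D0 [D1 [D2 D3]]].
  unfold cA0, cA1, cA2, cA3. repeat split.
  - eapply dpl_eq; [exact D0|]. unfold b; ring.
  - eapply dpl_eq; [exact D1|]. unfold b; ring.
  - eapply dpl_eq; [exact D2|]. unfold b; ring.
  - eapply dpl_eq; [exact D3|]. unfold b; ring.
Qed.

Lemma sol_cont h0 h1 h2 h3 g0 g1 g2 g3 : is_solution h0 h1 h2 h3 g0 g1 g2 g3 ->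
  forall t, 0 <= t ->
  continuity_pt g0 t /\ continuity_pt g1 t /\ continuity_pt g2 t /\ continuity_pt g3 t.
Proof.
  intros [_ [_ [_ [_ HS]]]] t Ht. destruct (HS t Ht) as [D0 [D1 [D2 D3]]].
  repeat split; eapply dpl_cont; eassumption.
Qed.

Lemma sol_contA h0 h1 h2 h3 g0 g1 g2 g3 : is_solution h0 h1 h2 h3 g0 g1 g2 g3 ->
  forall t, 0 <= t -> let b := beta h0 h1 h2 h3 in
  continuity_pt (cA0 b g0 g1 g2) t /\ continuity_pt (cA1 b g0 g1 g2) t /\
  continuity_pt (cA2 b g0 g1 g2) t /\ continuity_pt (cA3 b g0 g1 g2) t.
Proof.
  intros HS t Ht b. destruct (sol_cont _ _ _ _ _ _ _ _ HS t Ht) as [C0 [C1 [C2 C3]]].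
  unfold cA0, cA1, cA2, cA3, pp, qq. repeat split; ctac.
Qed.

Lemma sol_pos h0 h1 h2 h3 g0 g1 g2 g3 : 0 < h0 -> 0 < h1 -> 0 < h2 -> 0 < h3 ->
  is_solution h0 h1 h2 h3 g0 g1 g2 g3 ->
  forall t, 0 <= t -> 0 < g0 t /\ 0 < g1 t /\ 0 < g2 t /\ 0 < g3 t.
Proof.
  intros P0 P1 P2 P3 HS t Ht.
  pose proof (sol_deriv _ _ _ _ _ _ _ _ HS) as D.
  pose proof (sol_contA _ _ _ _ _ _ _ _ HS) as C.
  destruct HS as [I0 [I1 [I2 [I3 _]]]].
  repeat split.
  - apply (lin_pos g0 (cA0 (beta h0 h1 h2 h3) g0 g1 g2)); auto; try (intros; now apply D); try (intros; now apply C); lra.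
  - apply (lin_pos g1 (cA1 (beta h0 h1 h2 h3) g0 g1 g2)); auto; try (intros; now apply D); try (intros; now apply C); lra.
  - apply (lin_pos g2 (cA2 (beta h0 h1 h2 h3) g0 g1 g2)); auto; try (intros; now apply D); try (intros; now apply C); lra.
  - apply (lin_pos g3 (cA3 (beta h0 h1 h2 h3) g0 g1 g2)); auto; try (intros; now apply D); try (intros; now apply C); lra.
Qed.

Ltac dtac2 := repeat first [ apply dpl_mult | apply dpl_plus | apply dpl_minus | apply dpl_opp
  | apply dpl_pow | apply dpl_ln | apply dpl_const | eassumption ].

Lemma ln_Z a b c : 0 < a -> 0 < b -> 0 < c -> ln (a ^ 2 / (b * c)) = 2 * ln a - ln b - ln c.
Proof.
  intros. unfold Rdiv. rewrite ln_mult, ln_Rinv, ln_mult, ln_pow; auto.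
  simpl; ring. all: try apply pow_lt; try apply Rinv_0_lt_compat; try apply Rmult_lt_0_compat; auto.
Qed.

Lemma ln_J a d : 0 < a -> 0 < d -> ln (a ^ 3 * d) = 3 * ln a + ln d.
Proof.
  intros. rewrite ln_mult, ln_pow; auto. simpl; ring. apply pow_lt; auto.
Qed.

Lemma S_pos x y : 0 < x -> 0 < y -> 0 < 2 * y ^ 2 - x * y + 2 * x ^ 2.
Proof. intros Hx Hy. assert (0 < x * x) by (apply Rmult_lt_0_compat; auto). pose proof (Rle_0_sqr (x - y)); unfold Rsqr in *. assert (0 < y * y) by (apply Rmult_lt_0_compat; auto). simpl. lra. Qed.

Lemma ln_E x y : 0 < x -> 0 < y ->
  ln ((x * y) ^ 25 / ((y + x) ^ 4 * (2 * y ^ 2 - x * y + 2 * x ^ 2) ^ 3)) =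
  25 * ln x + 25 * ln y - 4 * ln (y + x) - 3 * ln (2 * y ^ 2 - x * y + 2 * x ^ 2).
Proof.
  intros. pose proof (S_pos x y H H0).
  unfold Rdiv. rewrite ln_mult, ln_Rinv, ln_mult, !ln_pow, ln_mult; auto.
  simpl; ring. all: try lra.
  all: repeat first [apply Rinv_0_lt_compat | apply Rmult_lt_0_compat | apply pow_lt]; lra.
Qed.

Lemma inv_Z h0 h1 h2 h3 g0 g1 g2 g3 : 0 < h0 -> 0 < h1 -> 0 < h2 -> 0 < h3 ->
  is_solution h0 h1 h2 h3 g0 g1 g2 g3 ->
  forall t, 0 <= t -> g0 t ^ 2 / (g1 t * g2 t) = h0 ^ 2 / (h1 * h2).
Proof.
  intros P0 P1 P2 P3 HS t Ht.
  pose proof (sol_pos _ _ _ _ _ _ _ _ P0 P1 P2 P3 HS) as Pos.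
  pose proof (sol_deriv _ _ _ _ _ _ _ _ HS) as D.
  destruct HS as [I0 [I1 [I2 [I3 _]]]].
  destruct (Pos t Ht) as [Q0 [Q1 [Q2 Q3]]].
  apply ln_inv.
  - apply Rdiv_lt_0_compat; [apply pow_lt|apply Rmult_lt_0_compat]; auto.
  - apply Rdiv_lt_0_compat; [apply pow_lt|apply Rmult_lt_0_compat]; auto.
  - rewrite !ln_Z; auto. rewrite <- I0, <- I1, <- I2.
    apply (const_deriv (fun s => 2 * ln (g0 s) - ln (g1 s) - ln (g2 s))); auto.
    intros s Hs. destruct (Pos s Hs) as [R0 [R1 [R2 R3]]].
    destruct (D s Hs) as [D0 [D1 [D2 D3]]].
    eapply dpl_eq; [dtac2|]. unfold cA0, cA1, cA2, pp, qq. field. lra.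
Qed.

Lemma inv_J h0 h1 h2 h3 g0 g1 g2 g3 : 0 < h0 -> 0 < h1 -> 0 < h2 -> 0 < h3 ->
  is_solution h0 h1 h2 h3 g0 g1 g2 g3 ->
  forall t, 0 <= t -> g0 t ^ 3 * g3 t = h0 ^ 3 * h3.
Proof.
  intros P0 P1 P2 P3 HS t Ht.
  pose proof (sol_pos _ _ _ _ _ _ _ _ P0 P1 P2 P3 HS) as Pos.
  pose proof (sol_deriv _ _ _ _ _ _ _ _ HS) as D.
  destruct HS as [I0 [I1 [I2 [I3 _]]]].
  destruct (Pos t Ht) as [Q0 [Q1 [Q2 Q3]]].
  apply ln_inv.
  - apply Rmult_lt_0_compat; [apply pow_lt|]; auto.
  - apply Rmult_lt_0_compat; [apply pow_lt|]; auto.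
  - rewrite !ln_J; auto. rewrite <- I0, <- I3.
    apply (const_deriv (fun s => 3 * ln (g0 s) + ln (g3 s))); auto.
    intros s Hs. destruct (Pos s Hs) as [R0 [R1 [R2 R3]]].
    destruct (D s Hs) as [D0 [D1 [D2 D3]]].
    eapply dpl_eq; [dtac2|]. unfold cA0, cA3, pp, qq. field. lra.
Qed.

Lemma inv_E h0 h1 h2 h3 g0 g1 g2 g3 : 0 < h0 -> 0 < h1 -> 0 < h2 -> 0 < h3 ->
  is_solution h0 h1 h2 h3 g0 g1 g2 g3 ->
  forall t, 0 <= t ->
  (g1 t * g2 t) ^ 25 / ((g2 t + g1 t) ^ 4 * (2 * g2 t ^ 2 - g1 t * g2 t + 2 * g1 t ^ 2) ^ 3)
  = eta_of h1 h2.
Proof.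
  intros P0 P1 P2 P3 HS t Ht.
  pose proof (sol_pos _ _ _ _ _ _ _ _ P0 P1 P2 P3 HS) as Pos.
  pose proof (sol_deriv _ _ _ _ _ _ _ _ HS) as D.
  destruct HS as [I0 [I1 [I2 [I3 _]]]].
  destruct (Pos t Ht) as [Q0 [Q1 [Q2 Q3]]].
  assert (Hp : forall x y, 0 < x -> 0 < y -> 0 < (x * y) ^ 25 / ((y + x) ^ 4 * (2 * y ^ 2 - x * y + 2 * x ^ 2) ^ 3)).
  { intros x y Hx Hy. pose proof (S_pos x y Hx Hy).
    apply Rdiv_lt_0_compat; [apply pow_lt; nra|apply Rmult_lt_0_compat; apply pow_lt; lra]. }
  unfold eta_of. apply ln_inv; auto.
  rewrite !ln_E; auto. rewrite <- I1, <- I2.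
  apply (const_deriv (fun s => 25 * ln (g1 s) + 25 * ln (g2 s) - 4 * ln (g2 s + g1 s)
     - 3 * ln (2 * g2 s ^ 2 - g1 s * g2 s + 2 * g1 s ^ 2))); auto.
  intros s Hs. destruct (Pos s Hs) as [R0 [R1 [R2 R3]]].
  destruct (D s Hs) as [D0 [D1 [D2 D3]]].
  pose proof (S_pos _ _ R1 R2).
  assert (0 < g2 s + g1 s) by lra.
  eapply dpl_eq; [dtac2|]. unfold cA1, cA2, pp, qq. simpl. field. lra.
Qed.


Lemma L_mult f g (a b : R) : is_lim f p_infty a -> is_lim g p_infty b ->
  is_lim (fun t => f t * g t) p_infty (a * b).
Proof. intros Hf Hg. exact (is_lim_mult f g p_infty a b Hf Hg I). Qed.
Lemma L_plus f g (a b : R) : is_lim f p_infty a -> is_lim g p_infty b ->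
  is_lim (fun t => f t + g t) p_infty (a + b).
Proof. intros Hf Hg. exact (is_lim_plus f g p_infty a b (a+b) Hf Hg eq_refl). Qed.
Lemma L_minus f g (a b : R) : is_lim f p_infty a -> is_lim g p_infty b ->
  is_lim (fun t => f t - g t) p_infty (a - b).
Proof. intros Hf Hg. exact (is_lim_minus f g p_infty a b (a-b) Hf Hg eq_refl). Qed.
Lemma L_const (a : R) : is_lim (fun _ => a) p_infty a.
Proof. apply is_lim_const. Qed.
Lemma L_pow f (a : R) n : is_lim f p_infty a -> is_lim (fun t => f t ^ n) p_infty (a ^ n).
Proof. intros Hf. induction n as [|n IH]; simpl.
  - apply L_const.
  - apply L_mult; auto. Qed.
Lemma L_comp f phi (l : R) : is_lim f p_infty l -> continuity_pt phi l ->
  is_lim (fun t => phi (f t)) p_infty (phi l).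
Proof. intros Hf Hc. unfold is_lim in *. eapply filterlim_comp; [exact Hf|].
  apply continuity_pt_filterlim; exact Hc. Qed.
Lemma L_ext_ge0 f g (l : R) : (forall t, 0 <= t -> f t = g t) -> is_lim f p_infty l -> is_lim g p_infty l.
Proof. intros He Hf. apply (is_lim_ext_loc f g); auto. exists 0. intros; apply He; lra. Qed.
Lemma L_uniq f (a b : R) : is_lim f p_infty a -> is_lim f p_infty b -> a = b.
Proof. intros Ha Hb. apply is_lim_unique in Ha. apply is_lim_unique in Hb. rewrite Ha in Hb.
  now injection Hb. Qed.


Definition MM x y := 5 * x ^ 3 + 2 * x ^ 2 * y + 2 * x * y ^ 2 + 3 * y ^ 3.
Lemma pp_fact x y : pp (- x) y = (x - y) ^ 2 * (x ^ 2 + x * y + y ^ 2).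
Proof. unfold pp; ring. Qed.
Lemma qq1_fact x y : qq (- x) y = (x - y) * MM x y.
Proof. unfold qq, MM; ring. Qed.
Lemma qq2_fact x y : qq y (- x) = (y - x) * MM y x.
Proof. unfold qq, MM; ring. Qed.
Lemma MM_ge x y : 0 < x -> 0 < y -> 5 * x ^ 3 <= MM x y.
Proof. intros. unfold MM.
  assert (0 < x ^ 2 * y) by (apply Rmult_lt_0_compat; [apply pow_lt|]; auto).
  assert (0 < x * y ^ 2) by (apply Rmult_lt_0_compat; [|apply pow_lt]; auto).
  assert (0 < y ^ 3) by (apply pow_lt; auto). lra. Qed.
Lemma MM_pos x y : 0 < x -> 0 < y -> 0 < MM x y.
Proof. intros. pose proof (MM_ge x y H H0). assert (0 < x ^ 3) by (apply pow_lt; auto). lra. Qed.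

Definition cR (b : R) (g0 g1 g2 : R -> R) t :=
  - b * g0 t ^ 2 * (g1 t * MM (g1 t) (g2 t) + g2 t * MM (g2 t) (g1 t)).

Lemma diff_deriv h0 h1 h2 h3 g0 g1 g2 g3 : is_solution h0 h1 h2 h3 g0 g1 g2 g3 ->
  forall t, 0 <= t ->
  derivable_pt_lim (fun s => g2 s - g1 s) t (cR (beta h0 h1 h2 h3) g0 g1 g2 t * (g2 t - g1 t)) /\
  derivable_pt_lim (fun s => g1 s - g2 s) t (cR (beta h0 h1 h2 h3) g0 g1 g2 t * (g1 t - g2 t)).
Proof.
  intros HS t Ht. destruct (sol_deriv _ _ _ _ _ _ _ _ HS t Ht) as [D0 [D1 [D2 D3]]].
  split; (eapply dpl_eq; [apply dpl_minus; eassumption|]);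
  unfold cA1, cA2, cR; rewrite qq1_fact, qq2_fact; ring.
Qed.

Lemma cR_cont h0 h1 h2 h3 g0 g1 g2 g3 : is_solution h0 h1 h2 h3 g0 g1 g2 g3 ->
  forall t, 0 <= t -> continuity_pt (cR (beta h0 h1 h2 h3) g0 g1 g2) t.
Proof.
  intros HS t Ht. destruct (sol_cont _ _ _ _ _ _ _ _ HS t Ht) as [C0 [C1 [C2 C3]]].
  unfold cR, MM. ctac.
Qed.

Lemma g3_mono h0 h1 h2 h3 g0 g1 g2 g3 : 0 < h0 -> 0 < h1 -> 0 < h2 -> 0 < h3 ->
  is_solution h0 h1 h2 h3 g0 g1 g2 g3 ->
  forall s t, 0 <= s -> s <= t -> g3 s <= g3 t.
Proof.
  intros P0 P1 P2 P3 HS s t Hs Hst.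
  pose proof (beta_pos _ _ _ _ P0 P1 P2 P3) as Pb.
  apply (mono_le g3 (fun u => cA3 (beta h0 h1 h2 h3) g0 g1 g2 u * g3 u)); auto.
  - intros c Hc. apply (sol_deriv _ _ _ _ _ _ _ _ HS); lra.
  - intros c Hc. destruct (sol_pos _ _ _ _ _ _ _ _ P0 P1 P2 P3 HS c) as [Q0 [Q1 [Q2 Q3]]]; [lra|].
    unfold cA3. rewrite pp_fact.
    assert (0 <= (g1 c - g2 c) ^ 2) by (apply pow2_ge_0).
    assert (0 < g1 c ^ 2 + g1 c * g2 c + g2 c ^ 2).
    { assert (0 < g1 c * g2 c) by (apply Rmult_lt_0_compat; auto).
      assert (0 < g1 c ^ 2) by (apply pow_lt; auto).
      assert (0 < g2 c ^ 2) by (apply pow_lt; auto). lra. }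
    assert (0 < g0 c ^ 2) by (apply pow_lt; auto).
    apply Rmult_le_pos; [|lra]. apply Rmult_le_pos; [|lra]. apply Rmult_le_pos; [lra|]. apply Rmult_le_pos; lra.
Qed.

Lemma eq_case h0 h1 h2 h3 g0 g1 g2 g3 : 0 < h0 -> 0 < h1 -> 0 < h2 -> 0 < h3 ->
  is_solution h0 h1 h2 h3 g0 g1 g2 g3 -> h1 = h2 ->
  forall t, 0 <= t -> g0 t = h0 /\ g1 t = h1 /\ g2 t = h2 /\ g3 t = h3.
Proof.
  intros P0 P1 P2 P3 HS E t Ht.
  assert (Z : forall s, 0 <= s -> g1 s - g2 s = 0).
  { apply (lin_zero _ (cR (beta h0 h1 h2 h3) g0 g1 g2)).
    - intros; apply (diff_deriv _ _ _ _ _ _ _ _ HS); auto.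
    - intros; eapply cR_cont; eauto.
    - destruct HS as [_ [I1 [I2 _]]]. rewrite I1, I2; lra. }
  pose proof (sol_deriv _ _ _ _ _ _ _ _ HS) as D.
  destruct HS as [I0 [I1 [I2 [I3 _]]]].
  assert (K : forall f : R -> R, (forall s, 0 <= s -> derivable_pt_lim f s 0) -> f t = f 0).
  { intros f Hf. apply const_deriv; auto. }
  assert (Eq : forall s, 0 <= s -> g2 s = g1 s) by (intros s Hs; specialize (Z s Hs); lra).
  repeat split.
  - rewrite <- I0. apply K. intros s Hs. destruct (D s Hs) as [D0 _].
    eapply dpl_eq; [exact D0|]. unfold cA0. rewrite Eq, pp_fact; auto. ring.
  - rewrite <- I1. apply K. intros s Hs. destruct (D s Hs) as [_ [D1 _]].
    eapply dpl_eq; [exact D1|]. unfold cA1. rewrite Eq, qq1_fact; auto. ring.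
  - rewrite <- I2. apply K. intros s Hs. destruct (D s Hs) as [_ [_ [D2 _]]].
    eapply dpl_eq; [exact D2|]. unfold cA2. rewrite Eq, qq2_fact; auto. ring.
  - rewrite <- I3. apply K. intros s Hs. destruct (D s Hs) as [_ [_ [_ D3]]].
    eapply dpl_eq; [exact D3|]. unfold cA3. rewrite Eq, pp_fact; auto. ring.
Qed.

Lemma lt_case h0 h1 h2 h3 g0 g1 g2 g3 : 0 < h0 -> 0 < h1 -> 0 < h2 -> 0 < h3 ->
  is_solution h0 h1 h2 h3 g0 g1 g2 g3 -> h1 < h2 ->
  (forall t, 0 <= t -> g1 t < g2 t) /\
  (forall s t, 0 <= s -> s < t -> g1 s < g1 t) /\
  (forall s t, 0 <= s -> s < t -> g2 t < g2 s).
Proof.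
  intros P0 P1 P2 P3 HS Hlt.
  pose proof (beta_pos _ _ _ _ P0 P1 P2 P3) as Pb.
  assert (Z : forall s, 0 <= s -> 0 < g2 s - g1 s).
  { apply (lin_pos _ (cR (beta h0 h1 h2 h3) g0 g1 g2)).
    - intros; apply (diff_deriv _ _ _ _ _ _ _ _ HS); auto.
    - intros; eapply cR_cont; eauto.
    - destruct HS as [_ [I1 [I2 _]]]. rewrite I1, I2; lra. }
  pose proof (sol_deriv _ _ _ _ _ _ _ _ HS) as D.
  pose proof (sol_pos _ _ _ _ _ _ _ _ P0 P1 P2 P3 HS) as Pos.
  split; [|split].
  - intros t Ht; specialize (Z t Ht); lra.
  - intros s t Hs Hst.
    apply (mono_lt g1 (fun u => cA1 (beta h0 h1 h2 h3) g0 g1 g2 u * g1 u)); auto.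
    + intros c Hc. apply D; lra.
    + intros c Hc. destruct (Pos c) as [Q0 [Q1 [Q2 Q3]]]; [lra|].
      specialize (Z c ltac:(lra)). pose proof (MM_pos _ _ Q1 Q2).
      assert (0 < g0 c ^ 2) by (apply pow_lt; auto).
      unfold cA1. rewrite qq1_fact.
      replace (- beta h0 h1 h2 h3 * ((g1 c - g2 c) * MM (g1 c) (g2 c)) * g0 c ^ 2 * g1 c)
        with (beta h0 h1 h2 h3 * (g2 c - g1 c) * MM (g1 c) (g2 c) * g0 c ^ 2 * g1 c) by ring.
      apply Rmult_lt_0_compat; [|auto]. apply Rmult_lt_0_compat; [|auto]. apply Rmult_lt_0_compat; [|auto]. apply Rmult_lt_0_compat; auto.
  - intros s t Hs Hst.
    enough (- g2 s < - g2 t) by lra.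
    apply (mono_lt (fun u => - g2 u) (fun u => - (cA2 (beta h0 h1 h2 h3) g0 g1 g2 u * g2 u))); auto.
    + intros c Hc. apply dpl_opp, D; lra.
    + intros c Hc. destruct (Pos c) as [Q0 [Q1 [Q2 Q3]]]; [lra|].
      specialize (Z c ltac:(lra)). pose proof (MM_pos _ _ Q2 Q1).
      assert (0 < g0 c ^ 2) by (apply pow_lt; auto).
      unfold cA2. rewrite qq2_fact.
      replace (- (- beta h0 h1 h2 h3 * ((g2 c - g1 c) * MM (g2 c) (g1 c)) * g0 c ^ 2 * g2 c))
        with (beta h0 h1 h2 h3 * (g2 c - g1 c) * MM (g2 c) (g1 c) * g0 c ^ 2 * g2 c) by ring.
      apply Rmult_lt_0_compat; [|auto]. apply Rmult_lt_0_compat; [|auto]. apply Rmult_lt_0_compat; [|auto]. apply Rmult_lt_0_compat; auto.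
Qed.


Lemma rpow_L L A : 0 < L -> L ^ 40 = A ->
  Rpower A (1 / 40) = L /\ Rpower A (- (3 / 40)) = / L ^ 3.
Proof.
  intros HL HA. subst A. rewrite <- (Rpower_pow 40 L HL).
  rewrite !Rpower_mult. rewrite INR_IZR_INZ. simpl Z.of_nat. split.
  - replace (IZR 40 * (1/40)) with 1 by field. apply Rpower_1; auto.
  - replace (IZR 40 * (- (3/40))) with (- (INR 3)) by (simpl; field).
    rewrite Rpower_Ropp, Rpower_pow; auto.
Qed.

Lemma tends_opp f l : tends_at_infty (fun t => - f t) (- l) -> tends_at_infty f l.
Proof.
  intros H eps Heps. destruct (H eps Heps) as [M HM]. exists M. intros t Ht.
  specialize (HM t Ht). replace (f t - l) with (- (- f t - - l)) by ring. rewrite Rabs_Ropp; auto.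
Qed.

Lemma prod5_le b x1 x2 x3 x4 y1 y2 y3 y4 : 0 <= b -> 0 <= x1 <= y1 -> 0 <= x2 <= y2 ->
  0 <= x3 <= y3 -> 0 <= x4 <= y4 -> b * x1 * x2 * x3 * x4 <= b * y1 * y2 * y3 * y4.
Proof.
  intros Hb [A1 B1] [A2 B2] [A3 B3] [A4 B4].
  assert (0 <= b * x1) by (apply Rmult_le_pos; auto).
  assert (0 <= b * x1 * x2) by (apply Rmult_le_pos; auto).
  assert (0 <= b * x1 * x2 * x3) by (apply Rmult_le_pos; auto).
  apply Rmult_le_compat; auto. apply Rmult_le_compat; auto. apply Rmult_le_compat; auto.
  apply Rmult_le_compat_l; auto.
Qed.

Lemma lim_lt h0 h1 h2 h3 g0 g1 g2 g3 : 0 < h0 -> 0 < h1 -> 0 < h2 -> 0 < h3 ->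
  is_solution h0 h1 h2 h3 g0 g1 g2 g3 -> h1 < h2 ->
  exists L, 0 < L /\ tends_at_infty g1 L /\ tends_at_infty g2 L.
Proof.
  intros P0 P1 P2 P3 HS Hlt.
  destruct (lt_case _ _ _ _ _ _ _ _ P0 P1 P2 P3 HS Hlt) as [L12 [Inc1 Dec2]].
  pose proof (sol_deriv _ _ _ _ _ _ _ _ HS) as D.
  pose proof (sol_pos _ _ _ _ _ _ _ _ P0 P1 P2 P3 HS) as Pos.
  pose proof (inv_Z _ _ _ _ _ _ _ _ P0 P1 P2 P3 HS) as IZ.
  pose proof (beta_pos _ _ _ _ P0 P1 P2 P3) as Pb.
  destruct HS as [I0 [I1 [I2 [I3 _]]]].
  assert (Le1 : forall s t, 0 <= s -> s <= t -> g1 s <= g1 t).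
  { intros s t Hs Hst. destruct (Req_dec s t) as [->|]; [lra|]. left; apply Inc1; lra. }
  assert (Le2 : forall s t, 0 <= s -> s <= t -> g2 t <= g2 s).
  { intros s t Hs Hst. destruct (Req_dec s t) as [->|]; [lra|]. left; apply Dec2; lra. }
  assert (Cross : forall s t, 0 <= s -> 0 <= t -> g1 s <= g2 t).
  { intros s t Hs Ht. set (m := Rmax s t).
    assert (g1 s <= g1 m) by (apply Le1; auto; apply Rmax_l).
    assert (g2 m <= g2 t) by (apply Le2; auto; apply Rmax_r).
    assert (g1 m < g2 m) by (apply L12; unfold m; apply Rle_trans with s; auto; apply Rmax_l).
    lra. }
  assert (G1l : forall t, 0 <= t -> h1 <= g1 t) by (intros; rewrite <- I1; apply Le1; lra).
  assert (G2u : forall t, 0 <= t -> g2 t <= h2) by (intros; rewrite <- I2; apply Le2; lra).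
  destruct (mono_conv g1 h2 Le1) as [a [Ta [Ua La]]].
  { intros t Ht. specialize (Cross t 0 Ht (Rle_refl 0)). rewrite I2 in Cross. auto. }
  destruct (mono_conv (fun t => - g2 t) (- h1)) as [nb [Tb [Ub Lb]]].
  { intros s t Hs Hst. specialize (Le2 s t Hs Hst). lra. }
  { intros t Ht. specialize (Cross 0 t (Rle_refl 0) Ht). rewrite I1 in Cross. lra. }
  set (b := - nb).
  assert (Tb' : tends_at_infty g2 b) by (apply tends_opp; unfold b; rewrite Ropp_involutive; exact Tb).
  assert (G2b : forall t, 0 <= t -> b <= g2 t) by (intros t Ht; specialize (Ub t Ht); unfold b; lra).
  assert (Hab : a <= b).
  { apply La. intros s Hs. unfold b.
    enough (nb <= - g1 s) by lra. apply Lb. intros t Ht. specialize (Cross s t Hs Ht). lra. }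
  assert (Hab2 : ~ a < b).
  { intros Hab'.
    set (c := h0 ^ 2 / (h1 * h2)).
    assert (Hc : 0 < c) by (unfold c; apply Rdiv_lt_0_compat; [apply pow_lt; auto| apply Rmult_lt_0_compat; auto]).
    set (del := beta h0 h1 h2 h3 * (b - a) * (5 * h1 ^ 3) * (c * (h1 * h1)) * h1).
    assert (Hdel : 0 < del).
    { unfold del. assert (0 < h1 ^ 3) by (apply pow_lt; auto).
      apply Rmult_lt_0_compat; auto. apply Rmult_lt_0_compat.
      apply Rmult_lt_0_compat. apply Rmult_lt_0_compat; lra. lra.
      apply Rmult_lt_0_compat; auto. apply Rmult_lt_0_compat; auto. }
    assert (Hder : forall t, 0 <= t -> del <= cA1 (beta h0 h1 h2 h3) g0 g1 g2 t * g1 t).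
    { intros t Ht. destruct (Pos t Ht) as [Q0 [Q1 [Q2 Q3]]].
      pose proof (G1l t Ht). pose proof (G2b t Ht). pose proof (Ua t Ht).
      pose proof (L12 t Ht).
      assert (E0 : g0 t ^ 2 = c * (g1 t * g2 t)).
      { unfold c. rewrite <- (IZ t Ht). field. split; lra. }
      unfold cA1. rewrite qq1_fact, E0.
      replace (- beta h0 h1 h2 h3 * ((g1 t - g2 t) * MM (g1 t) (g2 t)) * (c * (g1 t * g2 t)) * g1 t)
        with (beta h0 h1 h2 h3 * (g2 t - g1 t) * MM (g1 t) (g2 t) * (c * (g1 t * g2 t)) * g1 t) by ring.
      unfold del.
      assert (5 * h1 ^ 3 <= MM (g1 t) (g2 t)).
      { apply Rle_trans with (5 * g1 t ^ 3); [|apply MM_ge; auto].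
        apply Rmult_le_compat_l; [lra|]. apply pow_incr; lra. }
      assert (h1 * h1 <= g1 t * g2 t) by (apply Rmult_le_compat; lra).
      assert (0 < h1 ^ 3) by (apply pow_lt; auto).
      assert (c * (h1 * h1) <= c * (g1 t * g2 t)) by (apply Rmult_le_compat_l; lra).
      assert (0 <= c * (h1 * h1)) by (apply Rmult_le_pos; nra).
      apply prod5_le; lra. }
    set (T := (h2 - h1) / del + 1).
    assert (HT : 0 <= T) by (unfold T; assert (0 < (h2 - h1)/del) by (apply Rdiv_lt_0_compat; lra); lra).
    assert (Hm : g1 0 - del * 0 <= g1 T - del * T).
    { apply (mono_le (fun s => g1 s - del * s) (fun s => cA1 (beta h0 h1 h2 h3) g0 g1 g2 s * g1 s - del)); auto.
      - intros s Hs. apply dpl_minus. apply D; lra.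
        apply (dpl_eq _ _ _ _ (dpl_mult (fun _ => del) (fun s => s) s 0 1 (dpl_const del s) (derivable_pt_lim_id s))). ring.
      - intros s Hs. specialize (Hder s ltac:(lra)). lra. }
    assert (g1 T < h2) by (specialize (L12 T HT); specialize (G2u T HT); lra).
    rewrite I1 in Hm. replace (del * T) with (h2 - h1 + del) in Hm by (unfold T; field; lra). lra. }
  assert (a = b) by lra.
  exists a. split; [|split]; auto.
  - pose proof (Ua 0 (Rle_refl 0)). lra.
  - rewrite H; auto.
Qed.


Lemma beta_swap h0 h1 h2 h3 : beta h0 h2 h1 h3 = beta h0 h1 h2 h3.
Proof. unfold beta. f_equal. f_equal. f_equal. ring. Qed.

Lemma eta_swap h1 h2 : eta_of h2 h1 = eta_of h1 h2.
Proof. unfold eta_of. f_equal; [ring|]. f_equal; f_equal; ring. Qed.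

Lemma sol_swap h0 h1 h2 h3 g0 g1 g2 g3 : is_solution h0 h1 h2 h3 g0 g1 g2 g3 ->
  is_solution h0 h2 h1 h3 g0 g2 g1 g3.
Proof.
  intros [I0 [I1 [I2 [I3 HS]]]]. repeat split; auto.
  all: match goal with [ H : 0 <= ?t |- _ ] => destruct (HS t H) as [D0 [D1 [D2 D3]]] end; rewrite beta_swap.
  - eapply dpl_eq; [exact D0|]. unfold pp; ring.
  - eapply dpl_eq; [exact D2|]. unfold qq; ring.
  - eapply dpl_eq; [exact D1|]. unfold qq; ring.
  - eapply dpl_eq; [exact D3|]. unfold pp; ring.
Qed.

Lemma lim_all h0 h1 h2 h3 g0 g1 g2 g3 : 0 < h0 -> 0 < h1 -> 0 < h2 -> 0 < h3 ->
  is_solution h0 h1 h2 h3 g0 g1 g2 g3 ->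
  exists L, 0 < L /\ tends_at_infty g1 L /\ tends_at_infty g2 L.
Proof.
  intros P0 P1 P2 P3 HS.
  destruct (Rtotal_order h1 h2) as [Hlt|[Heq|Hgt]].
  - exact (lim_lt _ _ _ _ _ _ _ _ P0 P1 P2 P3 HS Hlt).
  - exists h1. split; auto.
    pose proof (eq_case _ _ _ _ _ _ _ _ P0 P1 P2 P3 HS Heq) as E.
    split; intros eps Heps; exists 0; intros t Ht; destruct (E t Ht) as [_ [E1 [E2 _]]].
    + rewrite E1, Rminus_diag, Rabs_R0; auto.
    + rewrite E2, Heq, Rminus_diag, Rabs_R0; auto.
  - destruct (lim_lt _ _ _ _ _ _ _ _ P0 P2 P1 P3 (sol_swap _ _ _ _ _ _ _ _ HS) Hgt) as [L [HL [T1 T2]]].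
    exists L; auto.
Qed.

Lemma L40 h0 h1 h2 h3 g0 g1 g2 g3 L : 0 < h0 -> 0 < h1 -> 0 < h2 -> 0 < h3 ->
  is_solution h0 h1 h2 h3 g0 g1 g2 g3 -> 0 < L ->
  tends_at_infty g1 L -> tends_at_infty g2 L -> L ^ 40 = 432 * eta_of h1 h2.
Proof.
  intros P0 P1 P2 P3 HS HL T1 T2.
  apply tends_is_lim in T1. apply tends_is_lim in T2.
  pose proof (inv_E _ _ _ _ _ _ _ _ P0 P1 P2 P3 HS) as IE.
  pose proof (sol_pos _ _ _ _ _ _ _ _ P0 P1 P2 P3 HS) as Pos.
  set (e := eta_of h1 h2) in *.
  set (F := fun t => (g1 t * g2 t) ^ 25 - e * ((g2 t + g1 t) ^ 4 * (2 * g2 t ^ 2 - g1 t * g2 t + 2 * g1 t ^ 2) ^ 3)).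
  assert (A1 : is_lim F p_infty ((L * L) ^ 25 - e * ((L + L) ^ 4 * (2 * L ^ 2 - L * L + 2 * L ^ 2) ^ 3))).
  { unfold F. apply L_minus. apply L_pow, L_mult; auto.
    apply L_mult. apply L_const. apply L_mult. apply L_pow, L_plus; auto.
    apply L_pow. apply L_plus. apply L_minus. apply L_mult. apply L_const. apply L_pow; auto.
    apply L_mult; auto. apply L_mult. apply L_const. apply L_pow; auto. }
  assert (A2 : is_lim F p_infty 0).
  { apply (L_ext_ge0 (fun _ => 0)). 2: apply L_const.
    intros t Ht. unfold F. rewrite <- (IE t Ht).
    destruct (Pos t Ht) as [_ [Q1 [Q2 _]]]. pose proof (S_pos _ _ Q1 Q2).
    field; repeat split; lra. }
  pose proof (L_uniq _ _ _ A1 A2) as U.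
  assert (L ^ 10 * (L ^ 40 - 432 * e) = 0) by (rewrite <- U; ring).
  apply Rmult_integral in H. destruct H as [H|H]; [|lra].
  exfalso. apply (pow_nonzero L 10); lra.
Qed.

Lemma cont_sqrt x : 0 < x -> continuity_pt sqrt x.
Proof. intros. eapply dpl_cont. apply derivable_pt_lim_sqrt; auto. Qed.

Lemma L_inv f (a : R) : is_lim f p_infty a -> a <> 0 -> is_lim (fun t => / f t) p_infty (/ a).
Proof. intros H Ha. apply (is_lim_inv f p_infty a) in H. exact H. intro E; apply Ha; now injection E. Qed.

Lemma forall_part h0 h1 h2 h3 g0 g1 g2 g3 : 0 < h0 -> 0 < h1 -> 0 < h2 -> 0 < h3 ->
  is_solution h0 h1 h2 h3 g0 g1 g2 g3 ->
  let deth := h0 * h1 * h2 * h3 in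
  let eta := eta_of h1 h2 in
     (forall s t, 0 <= s -> s <= t -> g3 s <= g3 t) /\
     (forall t, 0 <= t ->
        (g1 t * g2 t) ^ 25 =
        eta * (g2 t + g1 t) ^ 4 * (2 * g2 t ^ 2 - g1 t * g2 t + 2 * g1 t ^ 2) ^ 3) /\
     tends_at_infty g1 (Rpower (432 * eta) (1 / 40)) /\
     tends_at_infty g2 (Rpower (432 * eta) (1 / 40)) /\
     tends_at_infty g0
       (sqrt (h0 ^ 3 * h3 / deth) * Rpower (432 * eta) (1 / 40)) /\
     tends_at_infty g3
       (sqrt (deth ^ 3 / (h0 ^ 3 * h3)) * Rpower (432 * eta) (- (3 / 40))) /\
     (h1 = h2 -> forall t, 0 <= t ->
        g0 t = h0 /\ g1 t = h1 /\ g2 t = h2 /\ g3 t = h3) /\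
     (h1 < h2 ->
        (forall t, 0 <= t -> g1 t < g2 t) /\
        (forall s t, 0 <= s -> s < t -> g1 s < g1 t) /\
        (forall s t, 0 <= s -> s < t -> g2 t < g2 s)).
Proof.
  intros P0 P1 P2 P3 HS deth eta.
  pose proof (sol_pos _ _ _ _ _ _ _ _ P0 P1 P2 P3 HS) as Pos.
  destruct (lim_all _ _ _ _ _ _ _ _ P0 P1 P2 P3 HS) as [L [HL [T1 T2]]].
  pose proof (L40 _ _ _ _ _ _ _ _ L P0 P1 P2 P3 HS HL T1 T2) as H40.
  destruct (rpow_L L _ HL H40) as [R1 R2]. fold eta in R1, R2.
  rewrite R1, R2.
  set (c := h0 ^ 3 * h3 / deth).
  assert (Hc : 0 < c) by (unfold c, deth; apply Rdiv_lt_0_compat;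
    [apply Rmult_lt_0_compat; [apply pow_lt|]; auto | repeat apply Rmult_lt_0_compat; auto]).
  assert (Ec : c = h0 ^ 2 / (h1 * h2)) by (unfold c, deth; field; repeat split; lra).
  assert (G0 : forall t, 0 <= t -> g0 t = sqrt (c * (g1 t * g2 t))).
  { intros t Ht. destruct (Pos t Ht) as [Q0 [Q1 [Q2 Q3]]].
    rewrite Ec, <- (inv_Z _ _ _ _ _ _ _ _ P0 P1 P2 P3 HS t Ht).
    replace (g0 t ^ 2 / (g1 t * g2 t) * (g1 t * g2 t)) with (g0 t ^ 2) by (field; split; lra).
    rewrite sqrt_pow2; lra. }
  assert (T0 : tends_at_infty g0 (sqrt c * L)).
  { apply tends_is_lim. replace (sqrt c * L) with (sqrt (c * (L * L))).
    2: { rewrite sqrt_mult, sqrt_square; lra || nra. }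
    apply (L_ext_ge0 (fun t => sqrt (c * (g1 t * g2 t)))).
    { intros; symmetry; auto. }
    apply (L_comp (fun t => c * (g1 t * g2 t)) sqrt).
    - apply L_mult. apply L_const. apply L_mult; apply tends_is_lim; auto.
    - apply cont_sqrt. apply Rmult_lt_0_compat; nra. }
  split; [|split; [|split; [|split; [|split; [|split; [|split]]]]]].
  - apply (g3_mono _ _ _ _ _ _ _ _ P0 P1 P2 P3 HS).
  - intros t Ht. unfold eta. rewrite <- (inv_E _ _ _ _ _ _ _ _ P0 P1 P2 P3 HS t Ht).
    destruct (Pos t Ht) as [_ [Q1 [Q2 _]]]. pose proof (S_pos _ _ Q1 Q2).
    field; repeat split; lra.
  - auto.
  - auto.
  - exact T0.
  - apply tends_is_lim.
    apply (L_ext_ge0 (fun t => (h0 ^ 3 * h3) * / (g0 t ^ 3))).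
    { intros t Ht. destruct (Pos t Ht) as [Q0 _].
      rewrite <- (inv_J _ _ _ _ _ _ _ _ P0 P1 P2 P3 HS t Ht). field. lra. }
    assert (Hs : 0 < sqrt c) by (apply sqrt_lt_R0; auto).
    replace (sqrt (deth ^ 3 / (h0 ^ 3 * h3)) * / L ^ 3) with ((h0 ^ 3 * h3) * / ((sqrt c * L) ^ 3)).
    + apply L_mult. apply L_const. apply L_inv. apply L_pow. apply tends_is_lim; auto.
      apply pow_nonzero. nra.
    + assert (Hs2 : sqrt c ^ 2 = c) by (apply pow2_sqrt; lra).
      assert (sqrt (deth ^ 3 / (h0 ^ 3 * h3)) = h0 ^ 3 * h3 / sqrt c ^ 3).
      { rewrite <- (sqrt_pow2 (h0 ^ 3 * h3 / sqrt c ^ 3)).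
        2: { apply Rlt_le, Rdiv_lt_0_compat; [apply Rmult_lt_0_compat; [apply pow_lt|]; auto|apply pow_lt; auto]. }
        f_equal. replace ((h0 ^ 3 * h3 / sqrt c ^ 3) ^ 2) with ((h0 ^ 3 * h3) ^ 2 / (sqrt c ^ 2) ^ 3)
          by (field; lra).
        rewrite Hs2. unfold c. unfold deth. field. repeat split; lra. }
      rewrite H. field. split; lra.
  - intros E t Ht. apply (eq_case _ _ _ _ _ _ _ _ P0 P1 P2 P3 HS E t Ht).
  - intros E. apply (lt_case _ _ _ _ _ _ _ _ P0 P1 P2 P3 HS E).
Qed.


Definition Sg r := 2 * r ^ 2 - r + 2.
Definition Lf r0 r := (4 * (ln (1 + r) - ln (1 + r0)) + 3 * (ln (Sg r) - ln (Sg r0))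
   - 25 * (ln r - ln r0)) / 40.
Definition Xf x0 r0 r := x0 * exp (Lf r0 r).
Definition dl r := (4 / (1 + r) + 3 * (4 * r - 1) / Sg r - 25 / r) / 40.
Definition Qp r := 8 + 4 * r + 4 * r ^ 2 + 8 * r ^ 3.
Definition Vf K x0 r0 r := K * Xf x0 r0 r ^ 6 * r ^ 2 * (1 - r) * Qp r.
Definition nf K x0 r0 r := - / Vf K x0 r0 r.

Lemma Sg_pos r : 0 < Sg r.
Proof. unfold Sg. pose proof (Rle_0_sqr (r - 1/4)). unfold Rsqr in H. simpl. lra. Qed.

Lemma Xf_pos x0 r0 r : 0 < x0 -> 0 < Xf x0 r0 r.
Proof. intros. unfold Xf. apply Rmult_lt_0_compat; auto. apply exp_pos. Qed.

Lemma Xf_r0 x0 r0 : Xf x0 r0 r0 = x0.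
Proof. unfold Xf, Lf. rewrite !Rminus_diag. replace ((4 * 0 + 3 * 0 - 25 * 0) / 40) with 0 by field.
  rewrite exp_0; ring. Qed.

Lemma Lf_deriv r0 r : 0 < r -> derivable_pt_lim (Lf r0) r (dl r).
Proof.
  intros Hr. pose proof (Sg_pos r). apply is_derive_Reals. unfold Lf, dl, Sg in *.
  auto_derive.
  - repeat split; lra.
  - field. repeat split; lra.
Qed.

Lemma Xf_deriv x0 r0 r : 0 < r -> derivable_pt_lim (Xf x0 r0) r (Xf x0 r0 r * dl r).
Proof.
  intros Hr. unfold Xf.
  apply (dpl_eq _ _ _ _ (dpl_mult (fun _ => x0) (fun s => exp (Lf r0 s)) r 0 _ (dpl_const x0 r)
    (dpl_comp exp (Lf r0) r _ _ (Lf_deriv r0 r Hr) (derivable_pt_lim_exp _)))).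
  ring.
Qed.

Definition Sint K x0 r0 r := RInt (nf K x0 r0) r0 r.

Lemma cinv (f : R -> R) x : continuity_pt f x -> f x <> 0 -> continuity_pt (fun s => / f s) x.
Proof. intros; now apply (continuity_pt_inv f). Qed.
Lemma cid x : continuity_pt (fun s => s) x.
Proof. apply continuity_pt_id. Qed.

Lemma Qp_pos r : 0 < r -> 0 < Qp r.
Proof. intros. unfold Qp. assert (0 < r ^ 2) by (apply pow_lt; auto).
  assert (0 < r ^ 3) by (apply pow_lt; auto). lra. Qed.

Lemma Vf_neg K x0 r0 r : 0 < K -> 0 < x0 -> 1 < r -> Vf K x0 r0 r < 0.
Proof.
  intros HK Hx Hr. unfold Vf.
  assert (0 < Xf x0 r0 r ^ 6) by (apply pow_lt, Xf_pos; auto).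
  assert (0 < r ^ 2) by (apply pow_lt; lra).
  pose proof (Qp_pos r ltac:(lra)).
  assert (0 < K * Xf x0 r0 r ^ 6 * r ^ 2) by (apply Rmult_lt_0_compat; [apply Rmult_lt_0_compat|]; auto).
  assert (K * Xf x0 r0 r ^ 6 * r ^ 2 * (1 - r) < 0).
  { assert (0 < K * Xf x0 r0 r ^ 6 * r ^ 2 * (r - 1)) by (apply Rmult_lt_0_compat; lra). lra. }
  assert (0 < - (K * Xf x0 r0 r ^ 6 * r ^ 2 * (1 - r)) * Qp r) by (apply Rmult_lt_0_compat; lra).
  lra.
Qed.

Lemma nf_pos K x0 r0 r : 0 < K -> 0 < x0 -> 1 < r -> 0 < nf K x0 r0 r.
Proof.
  intros. unfold nf. pose proof (Vf_neg K x0 r0 r H H0 H1).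
  rewrite <- Rinv_opp. apply Rinv_0_lt_compat. lra.
Qed.

Lemma Xf_cont x0 r0 r : 0 < r -> continuity_pt (Xf x0 r0) r.
Proof. intros; eapply dpl_cont; apply Xf_deriv; auto. Qed.

Lemma nf_cont K x0 r0 r : 0 < K -> 0 < x0 -> 1 < r -> continuity_pt (nf K x0 r0) r.
Proof.
  intros HK Hx Hr. unfold nf. apply copp. apply cinv.
  - unfold Vf, Qp. pose proof (Xf_cont x0 r0 r ltac:(lra)). pose proof (cid r).
    repeat first [ eassumption | apply cmult | apply cplus | apply cminus | apply copp
      | apply cpow | apply cconst | eassumption ].
  - cbv beta. pose proof (Vf_neg K x0 r0 r HK Hx Hr). lra.
Qed.

Lemma nf_continuous K x0 r0 r : 0 < K -> 0 < x0 -> 1 < r -> continuous (nf K x0 r0) r.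
Proof. intros. apply continuity_pt_filterlim. apply nf_cont; auto. Qed.

Lemma Sint_deriv K x0 r0 r : 0 < K -> 0 < x0 -> 1 < r0 -> 1 < r ->
  derivable_pt_lim (Sint K x0 r0) r (nf K x0 r0 r).
Proof.
  intros HK Hx Hr0 Hr. apply is_derive_Reals. unfold Sint. apply (is_derive_RInt (nf K x0 r0) (fun b => RInt (nf K x0 r0) r0 b) r0 r).
  - assert (Hd : 0 < (r - 1) / 2) by lra.
    exists (mkposreal _ Hd). intros y Hy. apply (@RInt_correct R_CompleteNormedModule). apply (@ex_RInt_continuous R_CompleteNormedModule).
    intros z Hz. apply nf_continuous; auto.
    change (Rabs (y - r) < (r - 1) / 2) in Hy.
    apply Rabs_def2 in Hy.
    assert (1 < Rmin r0 y) by (apply Rmin_glb_lt; lra). lra.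
  - apply nf_continuous; auto.
Qed.

Lemma Sint_r0 K x0 r0 : Sint K x0 r0 r0 = 0.
Proof. unfold Sint. exact (@RInt_point R_CompleteNormedModule r0 (nf K x0 r0)). Qed.

Lemma Sint_lt K x0 r0 s t : 0 < K -> 0 < x0 -> 1 < r0 -> 1 < s -> s < t ->
  Sint K x0 r0 s < Sint K x0 r0 t.
Proof.
  intros. apply (mono_lt _ (nf K x0 r0)); auto.
  - intros; apply Sint_deriv; auto; lra.
  - intros; apply nf_pos; auto; lra.
Qed.

Lemma Sint_cont K x0 r0 s : 0 < K -> 0 < x0 -> 1 < r0 -> 1 < s -> continuity_pt (Sint K x0 r0) s.
Proof. intros. eapply dpl_cont. apply Sint_deriv; auto. Qed.

Lemma prod4_le x1 x2 x3 x4 y1 y2 y3 y4 : 0 <= x1 <= y1 -> 0 <= x2 <= y2 ->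
  0 <= x3 <= y3 -> 0 <= x4 <= y4 -> x1 * x2 * x3 * x4 <= y1 * y2 * y3 * y4.
Proof.
  intros [A1 B1] [A2 B2] [A3 B3] [A4 B4].
  assert (0 <= x1 * x2) by (apply Rmult_le_pos; auto).
  assert (0 <= x1 * x2 * x3) by (apply Rmult_le_pos; auto).
  apply Rmult_le_compat; auto. apply Rmult_le_compat; auto. apply Rmult_le_compat; auto.
Qed.

Lemma Qp_le s r : 0 < s -> s <= r -> Qp s <= Qp r.
Proof.
  intros. unfold Qp. assert (s ^ 2 <= r ^ 2) by (apply pow_incr; lra).
  assert (s ^ 3 <= r ^ 3) by (apply pow_incr; lra). lra.
Qed.

Lemma Sint_div K x0 r0 M : 0 < K -> 0 < x0 -> 1 < r0 ->
  exists a, 1 < a < r0 /\ Sint K x0 r0 a < M.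
Proof.
  intros HK Hx Hr0.
  assert (Hex : exists Mx, (forall c, 1 <= c <= r0 -> Xf x0 r0 c <= Xf x0 r0 Mx) /\ 1 <= Mx <= r0).
  { apply continuity_ab_maj; [lra|]. intros c Hc. apply Xf_cont; lra. }
  destruct Hex as [Mx [HMx _]].
  set (Xm := Xf x0 r0 Mx).
  assert (HXm : 0 < Xm) by (apply Xf_pos; auto).
  set (Den := K * Xm ^ 6 * r0 ^ 2 * Qp r0).
  assert (HDen : 0 < Den).
  { unfold Den. pose proof (Qp_pos r0 ltac:(lra)).
    apply Rmult_lt_0_compat; [|auto]. apply Rmult_lt_0_compat; [|apply pow_lt; lra].
    apply Rmult_lt_0_compat; [auto|apply pow_lt; auto]. }
  set (Cc := / Den).
  assert (HCc : 0 < Cc) by (apply Rinv_0_lt_compat; auto).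
  assert (Bnd : forall s, 1 < s <= r0 -> Cc / (s - 1) <= nf K x0 r0 s).
  { intros s Hs. unfold nf, Vf.
    assert (E : - / (K * Xf x0 r0 s ^ 6 * s ^ 2 * (1 - s) * Qp s) =
                / (K * Xf x0 r0 s ^ 6 * s ^ 2 * Qp s * (s - 1))).
    { rewrite <- Rinv_opp. f_equal. ring. }
    rewrite E. unfold Cc, Rdiv. rewrite <- Rinv_mult.
    apply Rinv_le_contravar.
    - pose proof (Qp_pos s ltac:(lra)). pose proof (Xf_pos x0 r0 s Hx).
      apply Rmult_lt_0_compat; [|lra]. apply Rmult_lt_0_compat; [|auto].
      apply Rmult_lt_0_compat; [|apply pow_lt; lra]. apply Rmult_lt_0_compat; [auto|apply pow_lt; auto].
    - unfold Den. apply Rmult_le_compat_r; [lra|].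
      pose proof (Qp_pos s ltac:(lra)). pose proof (Xf_pos x0 r0 s Hx).
      apply prod4_le.
      + lra.
      + split. apply pow_le; lra. apply pow_incr. split; [lra|]. apply HMx; lra.
      + split. apply pow_le; lra. apply pow_incr; lra.
      + split. lra. apply Qp_le; lra. }
  set (k := (Rabs M + 1) / Cc).
  assert (Hk : 0 < k) by (unfold k; apply Rdiv_lt_0_compat; [pose proof (Rabs_pos M); lra|auto]).
  set (a := 1 + (r0 - 1) * exp (- k)).
  assert (He : exp (- k) < 1) by (rewrite <- exp_0; apply exp_increasing; lra).
  assert (He0 : 0 < exp (- k)) by apply exp_pos.
  assert (Ha : 1 < a < r0) by (unfold a; split; nra).
  exists a. split; auto.
  assert (HD : Sint K x0 r0 a - Cc * ln (a - 1) <= Sint K x0 r0 r0 - Cc * ln (r0 - 1)).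
  { apply (mono_le (fun s => Sint K x0 r0 s - Cc * ln (s - 1)) (fun s => nf K x0 r0 s - Cc * (1 / (s - 1))) a r0); [lra| |].
    - intros s Hs. apply dpl_minus. apply Sint_deriv; auto; lra.
      assert (D1 : derivable_pt_lim (fun s => s - 1) s 1).
      { apply (dpl_eq _ _ _ _ (dpl_minus (fun s => s) (fun _ => 1) s 1 0 (derivable_pt_lim_id s) (dpl_const 1 s))). ring. }
      apply (dpl_eq _ _ _ _ (dpl_mult (fun _ => Cc) (fun s => ln (s - 1)) s 0 _ (dpl_const Cc s)
         (dpl_ln (fun s => s - 1) s 1 ltac:(lra) D1))).
      field. lra.
    - intros s Hs. specialize (Bnd s ltac:(lra)). unfold Rdiv in Bnd. lra. }
  rewrite Sint_r0 in HD.
  replace (a - 1) with ((r0 - 1) * exp (- k)) in HD by (unfold a; ring).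
  rewrite ln_mult, ln_exp in HD; [|lra|auto].
  assert (Cc * k = Rabs M + 1) by (unfold k; field; lra).
  pose proof (Rle_abs M). assert (Sint K x0 r0 a - Cc * (ln (r0 - 1) + - k) = Sint K x0 r0 a - Cc * ln (r0 - 1) + Cc * k) by ring. pose proof (Rle_abs (- M)) as HH; rewrite Rabs_Ropp in HH. lra.
Qed.

Definition Ginv K x0 r0 u := epsilon (inhabits 0) (fun r => 1 < r /\ Sint K x0 r0 r = u).

Lemma Sint_inj K x0 r0 s t : 0 < K -> 0 < x0 -> 1 < r0 -> 1 < s -> 1 < t ->
  Sint K x0 r0 s = Sint K x0 r0 t -> s = t.
Proof.
  intros. destruct (Rtotal_order s t) as [H5|[H5|H5]]; auto.
  - pose proof (Sint_lt K x0 r0 s t H H0 H1 H2 H5). lra.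
  - pose proof (Sint_lt K x0 r0 t s H H0 H1 H3 H5). lra.
Qed.

Lemma Sint_ivt K x0 r0 a b u : 0 < K -> 0 < x0 -> 1 < r0 -> 1 < a -> a < b ->
  Sint K x0 r0 a <= u <= Sint K x0 r0 b -> exists r, a <= r <= b /\ Sint K x0 r0 r = u.
Proof.
  intros HK Hx Hr0 Ha Hab [Hu1 Hu2].
  destruct (Req_dec u (Sint K x0 r0 a)) as [E|E]; [exists a; split; [lra|auto]|].
  destruct (Req_dec u (Sint K x0 r0 b)) as [E'|E']; [exists b; split; [lra|auto]|].
  destruct (Ranalysis5.IVT_interv (fun r => Sint K x0 r0 r - u) a b) as [z [Hz1 Hz2]].
  - intros c Hc. apply continuity_pt_minus. apply Sint_cont; auto; lra. apply continuity_pt_const; intros ? ?; auto.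
  - auto.
  - lra.
  - lra.
  - exists z. split; auto. lra.
Qed.

Lemma Ginv_in K x0 r0 a b u : 0 < K -> 0 < x0 -> 1 < r0 -> 1 < a -> a < b ->
  Sint K x0 r0 a <= u <= Sint K x0 r0 b ->
  a <= Ginv K x0 r0 u <= b /\ Sint K x0 r0 (Ginv K x0 r0 u) = u.
Proof.
  intros HK Hx Hr0 Ha Hab Hu.
  destruct (Sint_ivt K x0 r0 a b u HK Hx Hr0 Ha Hab Hu) as [r [Hr Hsr]].
  assert (Hs : 1 < Ginv K x0 r0 u /\ Sint K x0 r0 (Ginv K x0 r0 u) = u).
  { unfold Ginv. apply epsilon_spec. exists r. split; auto; lra. }
  destruct Hs as [Hs1 Hs2].
  assert (Ginv K x0 r0 u = r) by (apply (Sint_inj K x0 r0); auto; lra).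
  rewrite H. split; auto.
Qed.

Lemma Ginv_deriv K x0 r0 u0 : 0 < K -> 0 < x0 -> 1 < r0 -> u0 < Sint K x0 r0 (r0 + 1) ->
  1 < Ginv K x0 r0 u0 /\ derivable_pt_lim (Ginv K x0 r0) u0 (1 / nf K x0 r0 (Ginv K x0 r0 u0)).
Proof.
  intros HK Hx Hr0 Hu0.
  set (b := r0 + 1) in *.
  destruct (Sint_div K x0 r0 (u0 - 1) HK Hx Hr0) as [a [Ha Hsa]].
  assert (Hab : a < b) by (unfold b; lra).
  set (lb := Sint K x0 r0 a) in *. set (ub := Sint K x0 r0 b) in *.
  assert (Hin : forall u, lb <= u <= ub -> a <= Ginv K x0 r0 u <= b /\ Sint K x0 r0 (Ginv K x0 r0 u) = u).
  { intros u Hu. apply Ginv_in; auto; lra. }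
  assert (Hlu : lb < u0 < ub) by lra.
  destruct (Hin u0 ltac:(lra)) as [Hg0 _].
  assert (Glb : Ginv K x0 r0 lb = a).
  { destruct (Hin lb ltac:(lra)) as [H1 H2]. apply (Sint_inj K x0 r0); auto; lra. }
  assert (Gub : Ginv K x0 r0 ub = b).
  { destruct (Hin ub ltac:(lra)) as [H1 H2]. apply (Sint_inj K x0 r0); auto; lra. }
  split; [lra|].
  assert (Hcont : continuity_pt (Ginv K x0 r0) u0).
  { apply (Ranalysis5.continuity_pt_recip_interv (Sint K x0 r0) (Ginv K x0 r0) a b Hab).
    - intros x y Hx' Hxy Hy. apply Sint_lt; auto; lra.
    - intros x H1 H2. unfold comp, id. apply Hin; auto.
    - intros x H1 H2. apply Hin; auto.
    - intros c Hc. apply Sint_cont; auto; lra.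
    - auto. }
  assert (HG1 : 1 < Ginv K x0 r0 lb) by lra.
  set (Prf := fun a0 (H : Ginv K x0 r0 lb <= a0 <= Ginv K x0 r0 ub) =>
     exist (fun l => derivable_pt_lim (Sint K x0 r0) a0 l) (nf K x0 r0 a0)
       (Sint_deriv K x0 r0 a0 HK Hx Hr0 (Rlt_le_trans _ _ _ HG1 (proj1 H)))).
  assert (Hincr : Ginv K x0 r0 lb <= Ginv K x0 r0 u0 <= Ginv K x0 r0 ub) by (rewrite Glb, Gub; lra).
  pose proof (Ranalysis5.derivable_pt_lim_recip_interv (Sint K x0 r0) (Ginv K x0 r0) lb ub u0
    Prf Hcont ltac:(lra) Hlu Hincr) as HD.
  assert (Hder : derive_pt (Sint K x0 r0) (Ginv K x0 r0 u0) (Prf (Ginv K x0 r0 u0) Hincr)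
     = nf K x0 r0 (Ginv K x0 r0 u0)) by reflexivity.
  rewrite Hder in HD. apply HD.
  - intros x Hx'. unfold comp, id. apply Hin; auto.
  - pose proof (nf_pos K x0 r0 (Ginv K x0 r0 u0) HK Hx ltac:(lra)). lra.
Qed.


Lemma alg_g1 b c x r : 0 < r ->
  x * dl r * (b * c * x ^ 6 * r ^ 2 * (1 - r) * Qp r) = - b * qq (- x) (r * x) * (c * r * x ^ 2) * x.
Proof. intros. pose proof (Sg_pos r). unfold dl, Qp, qq, Sg in *. field. repeat split; lra. Qed.

Lemma alg_g2 b c x r : 0 < r ->
  (b * c * x ^ 6 * r ^ 2 * (1 - r) * Qp r) * x + r * (x * dl r * (b * c * x ^ 6 * r ^ 2 * (1 - r) * Qp r))
  = - b * qq (r * x) (- x) * (c * r * x ^ 2) * (r * x).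
Proof. intros. pose proof (Sg_pos r). unfold dl, Qp, qq, Sg in *. field. repeat split; lra. Qed.

Lemma alg_g0 b c x r s : 0 < r -> 0 < s -> s * s = c * r ->
  (c * (b * c * x ^ 6 * r ^ 2 * (1 - r) * Qp r)) * / (2 * s) * x
  + s * (x * dl r * (b * c * x ^ 6 * r ^ 2 * (1 - r) * Qp r))
  = - b * pp (- x) (r * x) * (s * x) ^ 3.
Proof.
  intros Hr Hs E. assert (Ec : c = s * s / r) by (rewrite E; field; lra).
  rewrite Ec. pose proof (Sg_pos r). unfold dl, Qp, pp, Sg in *. field. repeat split; lra.
Qed.

Lemma dpl_div_c (g : R -> R) J x l : g x <> 0 -> derivable_pt_lim g x l ->
  derivable_pt_lim (fun s => J / g s) x (- J * l / (g x) ^ 2).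
Proof.
  intros Hn H. apply (dpl_eq _ _ _ _ (derivable_pt_lim_div (fun _ => J) g x 0 l (dpl_const J x) H Hn)).
  unfold Rsqr. field. auto.
Qed.

Lemma exist_lt h0 h1 h2 h3 : 0 < h0 -> 0 < h1 -> 0 < h2 -> 0 < h3 -> h1 < h2 ->
  exists g0 g1 g2 g3, is_solution h0 h1 h2 h3 g0 g1 g2 g3.
Proof.
  intros P0 P1 P2 P3 Hlt.
  pose proof (beta_pos _ _ _ _ P0 P1 P2 P3) as Pb.
  set (b := beta h0 h1 h2 h3) in *.
  set (c := h0 ^ 2 / (h1 * h2)).
  assert (Hc : 0 < c) by (unfold c; apply Rdiv_lt_0_compat; [apply pow_lt; auto| apply Rmult_lt_0_compat; auto]).
  set (K := b * c).
  assert (HK : 0 < K) by (unfold K; apply Rmult_lt_0_compat; auto).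
  set (r0 := h2 / h1).
  assert (Hr0 : 1 < r0) by (unfold r0; apply (Rmult_lt_reg_r h1); auto; field_simplify; lra).
  set (rr := fun t => Ginv K h1 r0 (- t)).
  assert (HS0 : 0 < Sint K h1 r0 (r0 + 1)).
  { rewrite <- (Sint_r0 K h1 r0). apply Sint_lt; auto; lra. }
  assert (HR : forall t, 0 <= t -> 1 < rr t /\ derivable_pt_lim rr t (Vf K h1 r0 (rr t))).
  { intros t Ht. destruct (Ginv_deriv K h1 r0 (- t) HK P1 Hr0 ltac:(lra)) as [G1 G2].
    split; [exact G1|].
    assert (Dm : derivable_pt_lim (fun s => - s) t (- 1)) by (apply dpl_opp, derivable_pt_lim_id).
    apply (dpl_eq _ _ _ _ (dpl_comp (Ginv K h1 r0) (fun s => - s) t _ _ Dm G2)).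
    fold (rr t). unfold nf. pose proof (Vf_neg K h1 r0 (rr t) HK P1 G1). field. lra. }
  assert (R0 : rr 0 = r0).
  { unfold rr. rewrite Ropp_0.
    destruct (Sint_div K h1 r0 0 HK P1 Hr0) as [a [Ha Hsa]].
    destruct (Ginv_in K h1 r0 a (r0 + 1) 0 HK P1 Hr0 ltac:(lra) ltac:(lra)) as [H1' H2'].
    { split; lra. }
    apply (Sint_inj K h1 r0); auto; try lra. rewrite H2', Sint_r0; auto. }
  set (X := Xf h1 r0).
  set (g1 := fun t => X (rr t)).
  set (g2 := fun t => rr t * X (rr t)).
  set (g0 := fun t => sqrt (c * rr t) * X (rr t)).
  set (g3 := fun t => h0 ^ 3 * h3 / g0 t ^ 3).
  assert (Hsq : forall t, 0 <= t -> sqrt (c * rr t) * sqrt (c * rr t) = c * rr t).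
  { intros t Ht. apply sqrt_sqrt. destruct (HR t Ht). nra. }
  assert (Hsp : forall t, 0 <= t -> 0 < sqrt (c * rr t)).
  { intros t Ht. apply sqrt_lt_R0. destruct (HR t Ht). nra. }
  assert (D0 : forall t, 0 <= t -> derivable_pt_lim g0 t (- b * pp (- g1 t) (g2 t) * g0 t ^ 3)).
  { intros t Ht. destruct (HR t Ht) as [Hr Dr].
    assert (Dc : derivable_pt_lim (fun s => c * rr s) t (c * Vf K h1 r0 (rr t))).
    { apply (dpl_eq _ _ _ _ (dpl_mult (fun _ => c) rr t 0 _ (dpl_const c t) Dr)). ring. }
    assert (Ds : derivable_pt_lim (fun s => sqrt (c * rr s)) t
                 (c * Vf K h1 r0 (rr t) * / (2 * sqrt (c * rr t)))).
    { apply (dpl_eq _ _ _ _ (dpl_comp sqrt (fun s => c * rr s) t _ _ Dc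
              (derivable_pt_lim_sqrt (c * rr t) ltac:(nra)))). ring. }
    assert (DX : derivable_pt_lim (fun s => X (rr s)) t (X (rr t) * dl (rr t) * Vf K h1 r0 (rr t))).
    { apply (dpl_comp X rr t _ _ Dr). apply Xf_deriv. lra. }
    apply (dpl_eq _ _ _ _ (dpl_mult _ _ t _ _ Ds DX)).
    unfold g0, g1, g2. unfold Vf, K. fold X.
    rewrite <- (alg_g0 b c (X (rr t)) (rr t) (sqrt (c * rr t))); auto; try lra.
    }
  exists g0, g1, g2, g3.
  split; [|split; [|split; [|split]]].
  - unfold g0. rewrite R0. unfold X. rewrite Xf_r0.
    replace (c * r0) with ((h0 / h1) ^ 2) by (unfold c, r0; field; lra).
    rewrite sqrt_pow2. field; lra. apply Rlt_le, Rdiv_lt_0_compat; auto.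
  - unfold g1. rewrite R0. apply Xf_r0.
  - unfold g2. rewrite R0. unfold X. rewrite Xf_r0. unfold r0. field. lra.
  - unfold g3, g0. rewrite R0. unfold X. rewrite Xf_r0.
    replace (c * r0) with ((h0 / h1) ^ 2) by (unfold c, r0; field; lra).
    rewrite sqrt_pow2. field; lra. apply Rlt_le, Rdiv_lt_0_compat; auto.
  - intros t Ht. fold b. destruct (HR t Ht) as [Hr Dr].
    assert (Hx : 0 < X (rr t)) by (apply Xf_pos; auto).
    assert (E2 : g0 t ^ 2 = c * rr t * X (rr t) ^ 2).
    { unfold g0; cbv beta. transitivity (sqrt (c * rr t) * sqrt (c * rr t) * X (rr t) ^ 2); [ring|]. rewrite (Hsq t Ht); auto. }
    split; [|split; [|split]].
    + apply D0; auto.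
    + unfold g1 at 1. apply (dpl_eq _ _ _ _ (dpl_comp X rr t _ _ Dr (Xf_deriv h1 r0 (rr t) ltac:(lra)))).
      rewrite E2. unfold g1, g2, Vf, K. fold X. rewrite alg_g1; auto. lra.
    + assert (DX : derivable_pt_lim (fun s => X (rr s)) t (X (rr t) * dl (rr t) * Vf K h1 r0 (rr t))).
      { apply (dpl_comp X rr t _ _ Dr). apply Xf_deriv. lra. }
      unfold g2 at 1. apply (dpl_eq _ _ _ _ (dpl_mult _ _ t _ _ Dr DX)).
      rewrite E2. unfold g1, g2, Vf, K. fold X. rewrite <- alg_g2; [ring|lra].
    + assert (Hg0 : 0 < g0 t) by (unfold g0; apply Rmult_lt_0_compat; auto).
      pose proof (dpl_pow g0 3 t _ (D0 t Ht)) as D03.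
      unfold g3. apply (dpl_eq _ _ _ _ (dpl_div_c (fun s => g0 s ^ 3) (h0 ^ 3 * h3) t _ ltac:(apply pow_nonzero; lra) D03)).
      cbv beta. simpl INR. change (Init.Nat.pred 3) with 2%nat. field. lra.
Qed.


Lemma exist_all h0 h1 h2 h3 : 0 < h0 -> 0 < h1 -> 0 < h2 -> 0 < h3 ->
  exists g0 g1 g2 g3, is_solution h0 h1 h2 h3 g0 g1 g2 g3.
Proof.
  intros P0 P1 P2 P3.
  destruct (Rtotal_order h1 h2) as [Hlt|[Heq|Hgt]].
  - apply exist_lt; auto.
  - subst h2. exists (fun _ => h0), (fun _ => h1), (fun _ => h1), (fun _ => h3).
    repeat split; auto; intros; (eapply dpl_eq; [apply dpl_const|]); unfold pp, qq; ring.
  - destruct (exist_lt h0 h2 h1 h3 P0 P2 P1 P3 Hgt) as [g0 [g1 [g2 [g3 HS]]]].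
    exists g0, g2, g1, g3. apply sol_swap; auto.
Qed.

Theorem theorem5p6 (h0 h1 h2 h3 : R)
  (H0 : 0 < h0) (H1 : 0 < h1) (H2 : 0 < h2) (H3 : 0 < h3) :
  let deth := h0 * h1 * h2 * h3 in
  let eta := eta_of h1 h2 in
  (exists g0 g1 g2 g3 : R -> R, is_solution h0 h1 h2 h3 g0 g1 g2 g3) /\
  (forall g0 g1 g2 g3 : R -> R, is_solution h0 h1 h2 h3 g0 g1 g2 g3 ->
     (forall s t, 0 <= s -> s <= t -> g3 s <= g3 t) /\
     (forall t, 0 <= t ->
        (g1 t * g2 t) ^ 25 =
        eta * (g2 t + g1 t) ^ 4 * (2 * g2 t ^ 2 - g1 t * g2 t + 2 * g1 t ^ 2) ^ 3) /\
     tends_at_infty g1 (Rpower (432 * eta) (1 / 40)) /\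
     tends_at_infty g2 (Rpower (432 * eta) (1 / 40)) /\
     tends_at_infty g0
       (sqrt (h0 ^ 3 * h3 / deth) * Rpower (432 * eta) (1 / 40)) /\
     tends_at_infty g3
       (sqrt (deth ^ 3 / (h0 ^ 3 * h3)) * Rpower (432 * eta) (- (3 / 40))) /\
     (h1 = h2 -> forall t, 0 <= t ->
        g0 t = h0 /\ g1 t = h1 /\ g2 t = h2 /\ g3 t = h3) /\
     (h1 < h2 ->
        (forall t, 0 <= t -> g1 t < g2 t) /\
        (forall s t, 0 <= s -> s < t -> g1 s < g1 t) /\
        (forall s t, 0 <= s -> s < t -> g2 t < g2 s))).
Proof.
  intros deth eta. split.
  - apply exist_all; auto.
  - intros g0 g1 g2 g3 HS. exact (forall_part h0 h1 h2 h3 g0 g1 g2 g3 H0 H1 H2 H3 HS).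
Qed.
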